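(* Let $n\in\mathbb{N}$ and let $A:\mathbb{R}[x_1,\dots,x_n]\to\mathbb{R}[x_1,\dots,x_n]$ be a linear map belonging to $\mathfrak{g}$. Then $A$ has a complex eigenvalue, i.e., there exist $\lambda\in\mathbb{C}$ and a nonzero polynomial $p\in\mathbb{C}[x_1,\dots,x_n]$ such that $A p=\lambda p$, where $A$ is extended $\mathbb{C}$-linearly to $\mathbb{C}[x_1,\dots,x_n]$.
   Context: Topology on polynomials: a sequence $(p_i)_{i\in\mathbb{N}_0}$ in $\mathbb{R}[x_1,\dots,x_n]$ converges to $p$ if and only if $\sup_i \deg p_i<\infty$ and for every $\alpha\in\mathbb{N}_0^n$ the $x^\alpha$-coefficient of $p_i$ converges to the $x^\alpha$-coefficient of $p$. For a linear map $A$ on $\mathbb{R}[x_1,\dots,x_n]$ and $t\in\mathbb{R}$, the map $e^{tA}$ is called well-defined if for every polynomial $f$ the partial sums $\sum_{k=0}^{N}\frac{t^k}{k!}A^k f$ converge (as $N\to\infty$) in this sense to a polynomial, which is then $e^{tA}f$. Define $\mathfrak{g}$ as the set of all linear maps $A:\mathbb{R}[x_1,\dots,x_n]\to\mathbb{R}[x_1,\dots,x_n]$ such that $e^{tA}$ is well-defined for all $t\in\mathbb{R}$. *)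

(* Defs.v *)
From HB Require Import structures.
From mathcomp Require Import all_boot all_order all_algebra.
From mathcomp Require Import reals.
From mathcomp Require Import complex.
From mathcomp Require Import mpoly.
Set Implicit Arguments. Unset Strict Implicit. Unset Printing Implicit Defensive.
Import Order.TTheory GRing.Theory Num.Theory.
Local Open Scope ring_scope.

Definition real_cvg (R : realType) (u : nat -> R) (l : R) : Prop :=
  forall e : R, 0 < e -> exists N : nat, forall k : nat, (N <= k)%N -> `|u k - l| < e.

Definition poly_cvg (R : realType) (n : nat) (p : nat -> {mpoly R[n]})
    (q : {mpoly R[n]}) : Prop :=
  (exists D : nat, forall i : nat, (msize (p i) <= D)%N) /\
  (forall m : 'X_{1..n}, real_cvg (fun i => (p i)@_m) q@_m).

Definition exp_partial (R : realType) (n : nat)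
    (A : {mpoly R[n]} -> {mpoly R[n]}) (t : R) (f : {mpoly R[n]}) (N : nat)
    : {mpoly R[n]} :=
  \sum_(k < N.+1) ((t ^+ k) / (k`!)%:R) *: iter k A f.

Definition exp_well_defined (R : realType) (n : nat)
    (A : {mpoly R[n]} -> {mpoly R[n]}) (t : R) : Prop :=
  forall f : {mpoly R[n]}, exists g : {mpoly R[n]}, poly_cvg (exp_partial A t f) g.

Definition lin_map (R : realType) (n : nat) (A : {mpoly R[n]} -> {mpoly R[n]}) : Prop :=
  forall (a : R) (p q : {mpoly R[n]}), A (a *: p + q) = a *: A p + A q.

Definition in_frak_g (R : realType) (n : nat) (A : {mpoly R[n]} -> {mpoly R[n]}) : Prop :=
  lin_map A /\ forall t : R, exp_well_defined A t.

(* C-linear extension of A to C[x_1..x_n] = R[x] + i R[x]: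
   A_C (p1 + i p2) = A p1 + i A p2. *)
Definition complexify (R : realType) (n : nat) (A : {mpoly R[n]} -> {mpoly R[n]})
    (p : {mpoly (complex R)[n]}) : {mpoly (complex R)[n]} :=
  map_mpoly (fun x : R => Complex x 0) (A (map_mpoly (@complex.Re R) p))
  + (Complex (0 : R) 1) *: map_mpoly (fun x : R => Complex x 0) (A (map_mpoly (@complex.Im R) p)).

(* Main.v *)
Require Import Defs.
From HB Require Import structures.
From mathcomp Require Import all_boot all_order all_algebra.
From mathcomp Require Import reals.
From mathcomp Require Import complex.
From mathcomp Require Import mpoly.
From mathcomp Require Import ring.
Set Implicit Arguments. Unset Strict Implicit. Unset Printing Implicit Defensive.
Import Order.TTheory GRing.Theory Num.Theory.
Local Open Scope ring_scope.

Section Eig.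
Variables (F : closedFieldType) (V : lmodType F) (B : V -> V).
Hypothesis hB : forall a u v, B (a *: u + v) = a *: B u + B v.

Definition Ek (k : nat) (q : {poly F}) (g : V) := \sum_(i < k) q`_i *: iter i B g.

Lemma iterB_lin i a u v : iter i B (a *: u + v) = a *: iter i B u + iter i B v.
Proof. by elim: i => [|i IH] //=; rewrite IH hB. Qed.

Lemma iterB_sub i z u v : iter i B (u - z *: v) = iter i B u - z *: iter i B v.
Proof. by rewrite [u - _]addrC -[- (z *: v)]scaleNr iterB_lin scaleNr addrC. Qed.

Lemma Ek_shift k q g : Ek k.+1 (q * 'X) g = Ek k q (B g).
Proof.
rewrite /Ek big_ord_recl coefMX /= scale0r add0r.
by apply: eq_bigr => i _; rewrite coefMX /= -iterSr.
Qed.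

Lemma Ek_extend k (q : {poly F}) g : (size q <= k)%N -> Ek k.+1 q g = Ek k q g.
Proof.
by move=> hq; rewrite /Ek big_ord_recr /= nth_default // scale0r addr0.
Qed.

Lemma Ek_lin k q1 q2 z g : Ek k (q1 - z *: q2) g = Ek k q1 g - z *: Ek k q2 g.
Proof.
rewrite /Ek scaler_sumr -sumrB; apply: eq_bigr => i _.
by rewrite coefB coefZ scalerBl scalerA.
Qed.

Lemma Ek_lin_g k q z g h : Ek k q (g - z *: h) = Ek k q g - z *: Ek k q h.
Proof.
rewrite /Ek scaler_sumr -sumrB; apply: eq_bigr => i _.
by rewrite iterB_sub scalerBr !scalerA mulrC.
Qed.

Lemma eig_ann k : forall s (q : {poly F}) (g : V), (size q <= s)%N -> q != 0 -> (size q <= k)%N ->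
  g != 0 -> Ek k q g = 0 -> exists z v, v != 0 /\ B v = z *: v.
Proof.
elim=> [|s IH] q g hs q0 hk g0 hE.
  by move: hs; rewrite leqn0 size_poly_eq0 (negPf q0).
have [s1|s1] := eqVneq (size q) 1%N.
  have qE := size1_polyC (eq_leq s1).
  have c0 : q`_0 != 0 by apply: contraNneq q0 => h; rewrite qE h.
  move: hE; rewrite /Ek; clear IH; case: k hk => [|k] hk; first by move: hk; rewrite s1.
  rewrite big_ord_recl big1 ?addr0 => [/eqP|i _].
    by rewrite scaler_eq0 (negPf c0) (negPf g0).
  by rewrite nth_default ?scale0r // s1.
have [z /factor_theorem [q' qE]] := closed_rootP q s1.
have q'0 : q' != 0 by apply: contraNneq q0 => h; rewrite qE h mul0r.
have sq : size q = (size q').+1.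
  by rewrite qE size_mul // ?size_XsubC ?addn2 // -size_poly_eq0 size_XsubC.
move: hk hE IH; case: k => [|k] hk hE IH; first by move: hk; rewrite sq.
have hE' : Ek k.+1 q' (B g - z *: g) = 0.
  rewrite Ek_lin_g -Ek_shift Ek_extend.
    by rewrite -Ek_lin -hE qE mulrBr -mul_polyC [z%:P * _]mulrC.
  by rewrite size_mulX // -sq.
have [h0|h0] := eqVneq (B g - z *: g) 0.
  by exists z, g; split=> //; apply/eqP; rewrite -subr_eq0 h0.
apply: (IH q' _ _ q'0 _ h0 hE').
  by rewrite -ltnS -sq.
by rewrite (leq_trans _ hk) // sq.
Qed.
End Eig.

Section C.
Variables (R : realType) (n : nat).

Lemma coef_emb (p : {mpoly R[n]}) m :
  (map_mpoly (fun x : R => Complex x 0) p)@_m = Complex p@_m 0.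
Proof. exact: (mcoeff_map_mpoly (real_complex R) m p). Qed.

Lemma coef_Re (p : {mpoly (complex R)[n]}) m :
  (map_mpoly (@complex.Re R) p)@_m = complex.Re p@_m.
Proof. exact: (mcoeff_map_mpoly (@complex.Re R : Rcomplex R -> R) m p). Qed.

Lemma coef_Im (p : {mpoly (complex R)[n]}) m :
  (map_mpoly (@complex.Im R) p)@_m = complex.Im p@_m.
Proof. exact: (mcoeff_map_mpoly (@complex.Im R : Rcomplex R -> R) m p). Qed.
End C.

Section B.
Variables (R : realType) (n : nat) (A : {mpoly R[n]} -> {mpoly R[n]}).
Hypothesis linA : lin_map A.
Local Notation mRe := (@map_mpoly n _ _ (@complex.Re R)).
Local Notation mIm := (@map_mpoly n _ _ (@complex.Im R)).

Lemma A0 : A 0 = 0.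
Proof.
have h := linA 1 0 0; rewrite scaler0 addr0 scale1r in h.
by apply: (addIr (A 0)); rewrite add0r -h.
Qed.

Lemma coef_comb (P Q : {mpoly R[n]}) m :
  (map_mpoly (fun x : R => Complex x 0) P + (Complex (0 : R) 1) *: map_mpoly (fun x : R => Complex x 0) Q)@_m
  = Complex P@_m Q@_m.
Proof.
rewrite mcoeffD coef_emb mcoeffZ coef_emb.
by apply/eqP; rewrite eq_complex /= !mul0r !mul1r !subr0 !addr0 !add0r !eqxx.
Qed.

Lemma coef_B p m : (complexify A p)@_m = Complex (A (mRe p))@_m (A (mIm p))@_m.
Proof. exact: coef_comb. Qed.

Lemma mRe_lin (a : complex R) p q :
  mRe (a *: p + q) = complex.Re a *: mRe p + ((- complex.Im a) *: mIm p + mRe q).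
Proof.
apply/mpolyP => m; rewrite !(mcoeffD, mcoeffZ, coef_Re, coef_Im).
by case: a => ar ai; case: (p@_m) => x y; case: (q@_m) => z w /=; rewrite mulNr addrA.
Qed.

Lemma mIm_lin (a : complex R) p q :
  mIm (a *: p + q) = complex.Re a *: mIm p + (complex.Im a *: mRe p + mIm q).
Proof.
apply/mpolyP => m; rewrite !(mcoeffD, mcoeffZ, coef_Re, coef_Im).
by case: a => ar ai; case: (p@_m) => x y; case: (q@_m) => z w /=; rewrite addrA.
Qed.

Lemma B_lin a p q : complexify A (a *: p + q) = a *: complexify A p + complexify A q.
Proof.
apply/mpolyP => m.
rewrite coef_B.
rewrite mcoeffD.
rewrite coef_B.
rewrite mcoeffZ coef_B.
rewrite mRe_lin mIm_lin !linA.
rewrite !(mcoeffD, mcoeffZ).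
move: (A (mRe p))@_m (A (mIm p))@_m (A (mRe q))@_m (A (mIm q))@_m => x y z w.
case: a => ar ai.
apply/eqP; rewrite eq_complex /=; apply/andP; split; apply/eqP; ring.
Qed.
End B.

Section B2.
Variables (R : realType) (n : nat) (A : {mpoly R[n]} -> {mpoly R[n]}).
Hypothesis linA : lin_map A.
Local Notation mRe := (@map_mpoly n _ _ (@complex.Re R)).
Local Notation mIm := (@map_mpoly n _ _ (@complex.Im R)).
Local Notation emb := (@map_mpoly n _ _ (fun x : R => Complex x 0)).

Lemma B_emb P : complexify A (emb P) = emb (A P).
Proof.
have hR : mRe (emb P) = P by apply/mpolyP => m; rewrite coef_Re coef_emb.
have hI : mIm (emb P) = 0 by apply/mpolyP => m; rewrite coef_Im coef_emb mcoeff0.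
apply/mpolyP => m. rewrite coef_B. rewrite hR. rewrite hI. rewrite (A0 linA). rewrite mcoeff0. rewrite coef_emb. done.
Qed.

Lemma iter_emb k P : iter k (complexify A) (emb P) = emb (iter k A P).
Proof. elim: k => [|k IH]; first by []. rewrite !iterS IH. exact: B_emb. Qed.

Lemma iter_bound D : (forall i, msize (exp_partial A 1%R 1%R i) <= D)%N ->
  forall k, (msize (iter k A 1%R) <= D)%N.
Proof.
move=> HD [|k].
  have := HD 0%N. rewrite /exp_partial big_ord1. rewrite expr0 fact0 divr1 scale1r. done.
have E : iter k.+1 A 1 = (k.+1)`!%:R *: (exp_partial A 1 1 k.+1 - exp_partial A 1 1 k).
  have Sk : exp_partial A 1 1 k.+1 = exp_partial A 1 1 k + (1 ^+ k.+1 / (k.+1)`!%:R) *: iter k.+1 A 1.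
    by rewrite /exp_partial big_ord_recr.
  rewrite Sk addrAC subrr add0r expr1n div1r scalerA mulfV ?scale1r //.
  by rewrite pnatr_eq0 -lt0n fact_gt0.
rewrite E (leq_trans (msizeZ_le _ _)) // (leq_trans (msizeD_le _ _)) //.
by rewrite msizeN geq_max !HD.
Qed.
End B2.

Lemma mcoeff_sum_ord (S : nzRingType) (k K : nat) (F : 'I_K -> {mpoly S[k]}) m :
  (\sum_(i < K) F i)@_m = \sum_(i < K) (F i)@_m.
Proof. exact: raddf_sum. Qed.

Theorem mainTheorem1 (R : realType) (n : nat) (A : {mpoly R[n]} -> {mpoly R[n]})
    (hA : in_frak_g A) :
  exists (lambda : complex R) (p : {mpoly (complex R)[n]}),
    p != 0 /\ complexify A p = lambda *: p.
Proof.
case: hA => linA hexp.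
have [g0 [[D HD] _]] := hexp 1 1.
have Hb := iter_bound HD.
set B := complexify A.
set g : {mpoly (complex R)[n]} := map_mpoly (fun x : R => Complex x 0) 1.
have g0nz : g != 0.
  apply/eqP => /(congr1 (mcoeff 0%MM)).
  rewrite mcoeff0 /g coef_emb mcoeff1 eqxx /=.
  by move=> /eqP; rewrite eq_complex /= oner_eq0.
pose K := #|{: 'X_{1..n < D}}|.
pose M : 'M[complex R]_(K.+1, K) :=
  \matrix_(k < K.+1, j < K) (iter k B g)@_(bmnm (enum_val j)).
have kM : kermx M != 0.
  rewrite kermx_eq0; apply/negP => /eqP h.
  by have := rank_leq_col M; rewrite h ltnn.
have [i0 ri0] : exists i, row i (kermx M) != 0.
  apply/existsP; apply: contraNT kM; rewrite negb_exists => /forallP h.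
  by apply/eqP/row_matrixP => i; rewrite row0; apply/eqP; move: (h i); rewrite negbK.
set c := row i0 (kermx M) in ri0.
have hc : c *m M = 0 by rewrite /c -row_mul mulmx_ker row0.
have [j0 cj0] : exists j, c 0 j != 0.
  apply/existsP; apply: contraNT ri0; rewrite negb_exists => /forallP h.
  by apply/eqP/matrixP => a b; rewrite ord1; move: (h b); rewrite negbK => /eqP ->; rewrite mxE.
pose q : {poly complex R} := \poly_(k < K.+1) c 0 (inord k).
have qc : forall k : 'I_K.+1, q`_k = c 0 k.
  by move=> k; rewrite coef_poly ltn_ord inord_val.
have q0 : q != 0 by apply: contraNneq cj0 => h; rewrite -qc h coef0.
have sq : (size q <= K.+1)%N by apply: size_poly.
have hE : Ek B K.+1 q g = 0.
  apply/mpolyP => m; rewrite mcoeff0 /Ek mcoeff_sum_ord.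
  have [hm|hm] := ltnP (mdeg m) D.
    set b : 'X_{1..n < D} := BMultinom hm.
    have := congr1 (fun N : 'M[complex R]_(1, K) => N 0 (enum_rank b)) hc.
    rewrite !mxE => e; rewrite -[RHS]e; apply: eq_bigr => k _.
    by rewrite mcoeffZ qc; congr (_ * _); rewrite /M mxE enum_rankK.
  apply: big1 => k _; rewrite mcoeffZ /g /B iter_emb // coef_emb.
  have : m \notin msupp (iter k A 1) by apply: msize_mdeg_ge; exact: leq_trans (Hb k) hm.
  by rewrite mcoeff_msupp negbK => /eqP ->; rewrite mulr0.
have [z [v [v0 hv]]] := eig_ann (B_lin linA) (leqnn (size q)) q0 sq g0nz hE.
by exists z, v.
Qed.
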